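(* For integers $m\geq 1$ and $n\geq 2$, let $T_n$ be any tree with $n$ vertices and let $\overline{K_m}$ be the edgeless graph on $m$ vertices. Then $m+1\leq \chi_L(T_n\odot \overline{K_m})\leq \chi_L(T_n)+m$.
   Context: All graphs are finite and simple. A $k$-coloring of a connected graph $G$ is a map $c:V(G)\to\{1,\dots,k\}$ with $c(u)\neq c(v)$ for adjacent $u,v$; it induces the partition $\Pi=\{C_1,\dots,C_k\}$ into color classes $C_i=c^{-1}(i)$. The color code of $v$ is $c_\Pi(v)=(d(v,C_1),\dots,d(v,C_k))$ with $d(v,C_i)=\min\{d(v,x): x\in C_i\}$ (graph distance). $c$ is a locating coloring if distinct vertices have distinct color codes; the locating-chromatic number $\chi_L(G)$ is the least $k$ for which a locating $k$-coloring exists. The corona product $G\odot H$ of a graph $G$ with vertex set $\{a_1,\dots,a_n\}$ and a graph $H$ is obtained from one copy of $G$ and $n$ disjoint copies of $H$ by joining $a_i$ to every vertex of the $i$-th copy of $H$. *)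

(* Defs.v *)
From mathcomp Require Import all_boot.
Set Implicit Arguments. Unset Strict Implicit. Unset Printing Implicit Defensive.

Definition simple_graph (T : finType) (e : rel T) : Prop :=
  symmetric e /\ irreflexive e.

Definition connected_graph (T : finType) (e : rel T) : Prop :=
  forall x y : T, connect e x y.

Definition acyclic_graph (T : finType) (e : rel T) : Prop :=
  forall c : seq T, uniq c -> 3 <= size c -> ~~ cycle e c.

Definition is_tree (T : finType) (e : rel T) : Prop :=
  [/\ simple_graph e, connected_graph e & acyclic_graph e].

Fixpoint walk (T : finType) (e : rel T) (k : nat) (x y : T) : bool :=
  match k with
  | 0 => x == y
  | k'.+1 => [exists z, e x z && walk e k' z y]
  end.

(* Graph distance: least k with a walk of length k from x to y
   (every such k is < #|T| when x, y are connected; the value #|T|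
   is returned if y is unreachable, which never happens in connected graphs). *)
Definition dist (T : finType) (e : rel T) (x y : T) : nat :=
  find (fun k => walk e k x y) (iota 0 #|T|).

Definition dist_class (T : finType) (e : rel T) (k : nat) (c : T -> 'I_k)
    (v : T) (i : 'I_k) : nat :=
  \big[minn/#|T|]_(x | c x == i) dist e v x.

Definition color_code (T : finType) (e : rel T) (k : nat) (c : T -> 'I_k)
    (v : T) : {ffun 'I_k -> nat} :=
  [ffun i => dist_class e c v i].

Definition locating_coloring (T : finType) (e : rel T) (k : nat)
    (c : T -> 'I_k) : bool :=
  [&& [forall x, forall y, e x y ==> (c x != c y)],
      [forall i : 'I_k, exists x, c x == i]
    & injectiveb (color_code e c)].

Definition has_locating_coloring (T : finType) (e : rel T) (k : nat) : bool :=
  [exists c : {ffun T -> 'I_k}, locating_coloring e c].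

(* chi_L: least k admitting a locating k-coloring (searched among
   0..#|T|; a locating #|T|-coloring always exists for connected graphs). *)
Definition chiL (T : finType) (e : rel T) : nat :=
  find (has_locating_coloring e) (iota 0 #|T|.+1).

(* Corona product G ⊙ H: vertices inl a (a in G) and inr (a, x)
   (vertex x of the copy of H attached to a). *)
Definition corona (T U : finType) (eG : rel T) (eH : rel U) : rel (T + (T * U)) :=
  fun p q =>
    match p, q with
    | inl a, inl b => eG a b
    | inl a, inr (b, _) => a == b
    | inr (a, _), inl b => a == b
    | inr (a, x), inr (b, y) => (a == b) && eH x y
    end.

Definition edgeless (m : nat) : rel 'I_m := fun _ _ => false.
Arguments edgeless m : clear implicits.

(* Main.v *)
Require Import Defs.
From mathcomp Require Import all_boot.
Set Implicit Arguments. Unset Strict Implicit. Unset Printing Implicit Defensive.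

Lemma fi_le (P : pred nat) M i : i < M -> P i -> find P (iota 0 M) <= i.
Proof.
move=> iM Pi; rewrite leqNgt; apply/negP => /(before_find 0).
by rewrite nth_iota // add0n Pi.
Qed.

Lemma fi_P (P : pred nat) M : find P (iota 0 M) < M -> P (find P (iota 0 M)).
Proof.
move=> h; have hs : has P (iota 0 M) by rewrite has_find size_iota.
have := nth_find 0 hs; rewrite nth_iota ?add0n //.
Qed.

Lemma fi_min (P : pred nat) M M' : M <= M' ->
  find P (iota 0 M) = minn (find P (iota 0 M')) M.
Proof.
move=> le; rewrite -(subnKC le) iotaD find_cat.
case: ifP => h.
  by have := h; rewrite has_find size_iota => lt; rewrite (minn_idPl (ltnW lt)).
by rewrite hasNfind ?h // size_iota add0n (minn_idPr (leq_addr _ _)).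
Qed.

Lemma bigmin_leq (I : finType) (P : pred I) (g : I -> nat) D z :
  P z -> \big[minn/D]_(x | P x) g x <= g z.
Proof.
move=> Pz; rewrite -big_filter.
have : z \in [seq x <- index_enum I | P x] by rewrite mem_filter Pz mem_index_enum.
elim: [seq x <- index_enum I | P x] => [|y s IH] //.
rewrite inE big_cons => /orP[/eqP<-|/IH h]; first exact: geq_minl.
exact: leq_trans (geq_minr _ _) h.
Qed.

Lemma bigmin_geq (I : finType) (P : pred I) (g : I -> nat) D v :
  v <= D -> (forall z, P z -> v <= g z) -> v <= \big[minn/D]_(x | P x) g x.
Proof.
move=> vD h; apply: (big_ind (fun y => v <= y)) => //.
by move=> x y hx hy; rewrite leq_min hx hy.
Qed.

Lemma bigmin_att (I : finType) (P : pred I) (g : I -> nat) D :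
  \big[minn/D]_(x | P x) g x = D \/
  exists z, P z /\ g z = \big[minn/D]_(x | P x) g x.
Proof.
apply: (big_ind (fun y => y = D \/ exists z, P z /\ g z = y)); first by left.
  move=> x y hx hy; case: (leqP x y) => h.
    by [].
  by [].
by move=> i Pi; right; exists i.
Qed.

Section G.
Variables (T : finType) (e : rel T).

Lemma dist_xx x : dist e x x = 0.
Proof.
apply/eqP; rewrite -leqn0; apply: (@fi_le (fun k => walk e k x x)) => //=.
by apply/card_gt0P; exists x.
Qed.

Lemma dist0 x y : dist e x y = 0 -> x = y.
Proof.
move=> h; have: 0 < #|T| by apply/card_gt0P; exists x.
move=> pos; have := @fi_P (fun k => walk e k x y) #|T|.
by rewrite -/(dist e x y) h => /(_ pos) /eqP.
Qed.

Lemma dist_le x y : dist e x y <= #|T|.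
Proof. by rewrite /dist -{2}(size_iota 0 #|T|) find_size. Qed.

Lemma dist_walk x y k : k < #|T| -> walk e k x y -> dist e x y <= k.
Proof. by move=> lt w; apply: (@fi_le (fun k => walk e k x y)). Qed.

Lemma dist_walk2 x y : dist e x y < #|T| -> walk e (dist e x y) x y.
Proof. by move=> h; apply: (@fi_P (fun k => walk e k x y)). Qed.

Lemma path_walk x p : path e x p -> walk e (size p) x (last x p).
Proof.
elim: p x => [|y p IH] x /=; first by [].
by move=> /andP[exy pp]; apply/existsP; exists y; rewrite exy IH.
Qed.

Lemma conn_walk x y : connect e x y -> exists2 k, k < #|T| & walk e k x y.
Proof.
move=> /connectP[p pp ->]; case: (shortenP pp) => p' pp' u _.
exists (size p'); last exact: path_walk.
have := max_card (mem (x :: p')); rewrite (card_uniqP u) /=; by [].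
Qed.

Lemma conn_dist x y : connect e x y -> dist e x y < #|T|.
Proof.
move=> /conn_walk[k lt w]; exact: leq_ltn_trans (dist_walk lt w) lt.
Qed.

Lemma codes_col k (c : T -> 'I_k) x y :
  color_code e c x = color_code e c y -> c x = c y.
Proof.
move=> /ffunP /(_ (c x)); rewrite !ffunE /dist_class.
have -> : \big[minn/#|T|]_(z | c z == c x) dist e x z = 0.
  by apply/eqP; rewrite -leqn0 -(dist_xx x); apply: bigmin_leq.
move=> h; case: (bigmin_att (fun z => c z == c x) (dist e y) #|T|) => [|[z [/eqP cz dz]]].
  move=> hT; have : 0 < #|T| by apply/card_gt0P; exists x.
  by rewrite -hT -h.
by rewrite -h in dz; rewrite (dist0 dz) cz.
Qed.
End G.
Section C.
Variables (T : finType) (e : rel T) (m : nat).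
Local Notation G := (corona e (edgeless m)).
Local Notation V := (T + T * 'I_m)%type.

Lemma W1 k a z : walk e k a z -> walk G k (inl a) (inl z).
Proof.
elim: k a => [|k IH] a /=; first by move=> /eqP->.
by move=> /existsP[w /andP[ew wk]]; apply/existsP; exists (inl w); rewrite /= ew IH.
Qed.

Lemma W2 k a z : walk G k (inl a) (inl z) -> exists2 k', k' <= k & walk e k' a z.
Proof.
elim: k {-2}k (leqnn k) a => [|N IH] k.
  by rewrite leqn0 => /eqP-> a /= /eqP[->]; exists 0 => //=.
case: k => [|k] lk a /=.
  by move=> /eqP[->]; exists 0 => //=.
move=> /existsP[[b|[b y]] /andP[eab wk]].
  have [k' lk' w] := IH k lk b wk.
  by exists k'.+1 => //=; apply/existsP; exists b; rewrite eab.
move: eab => /= /eqP eab; subst b; case: k lk wk => [|k] lk //= /existsP[[b|[b y']] /andP[eb wk]] //.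
move: eb => /= /eqP eb; subst b.
have [k' lk' w] := IH k (leq_trans (leqnSn k) lk) a wk.
  by exists k' => //; rewrite (leq_trans lk') // ltnW // ltnW.
by move: eb => /=; rewrite /edgeless andbF.
Qed.

Lemma leaf_step k a j (y : V) : y != inr (a, j) ->
  walk G k.+1 (inr (a, j)) y = walk G k (inl a) y.
Proof.
move=> ny /=; apply/existsP/idP => [[[b|[b y']] /andP[eb wk]]|wk].
- by move: eb => /= /eqP eb; subst b.
- by move: eb => /=; rewrite /edgeless andbF.
- by exists (inl a); rewrite /= eqxx.
Qed.

Lemma Dleaf a j (y : V) : y != inr (a, j) ->
  dist G (inr (a, j)) y = (minn (dist G (inl a) y) #|{: V}|.-1).+1.
Proof.
move=> ny.
transitivity (find (fun k => walk G k (inl a) y) (iota 0 #|{: V}|.-1)).+1; last first.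
  by rewrite (@fi_min _ #|{: V}|.-1 #|{: V}|) // leq_pred.
rewrite /dist.
have pos : 0 < #|{: V}| by apply/card_gt0P; exists y.
have -> : iota 0 #|{: V}| = 0 :: iota 1 #|{: V}|.-1 by move: pos; case: #|{: V}|.
rewrite /= eq_sym (negbTE ny).
have -> : iota 1 #|{: V}|.-1 = [seq 1 + i | i <- iota 0 #|{: V}|.-1] by rewrite -iotaDl.
rewrite find_map.
rewrite (@eq_find _ _ (fun k => walk G k (inl a) y)) //.
by move=> k; rewrite -(leaf_step k ny).
Qed.

Lemma Dtree a z : connect e a z ->
  dist G (inl a) (inl z) = dist e a z.
Proof.
move=> cz; have hT := conn_dist cz.
have TV : #|T| <= #|{: V}| by rewrite card_sum leq_addr.
have w := dist_walk2 hT.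
have h1 : dist G (inl a) (inl z) <= dist e a z.
  by apply: dist_walk (W1 w); exact: leq_trans hT TV.
apply/eqP; rewrite eqn_leq h1 /=.
have h2 : dist G (inl a) (inl z) < #|{: V}| by exact: leq_ltn_trans h1 (leq_trans hT TV).
have [k' lk' w'] := W2 (dist_walk2 h2).
have lt' : k' < #|T| by exact: leq_ltn_trans lk' (leq_ltn_trans h1 hT).
exact: leq_trans (dist_walk lt' w') lk'.
Qed.
End C.

Section LB.
Variables (T : finType) (e : rel T) (m : nat).
Local Notation G := (corona e (edgeless m)).
Local Notation V := (T + T * 'I_m)%type.

Lemma LB (a : T) k (c : {ffun V -> 'I_k}) : locating_coloring G c -> m.+1 <= k.
Proof.
move=> /and3P[prop _ /injectiveP inj].
have cj : forall j j', c (inr (a, j)) = c (inr (a, j')) -> j = j'.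
  move=> j j' cjj; case: (eqVneq j j') => // nj; exfalso.
  have : color_code G c (inr (a, j)) = color_code G c (inr (a, j')).
    apply/ffunP => i; rewrite !ffunE /dist_class.
    case: (eqVneq i (c (inr (a, j)))) => hi.
      have -> : \big[minn/#|{: V}|]_(x | c x == i) dist G (inr (a, j)) x = 0.
        apply/eqP; rewrite -leqn0 -(dist_xx G (inr (a, j))).
        by apply: bigmin_leq; rewrite hi.
      apply/esym/eqP; rewrite -leqn0 -(dist_xx G (inr (a, j'))).
      by apply: bigmin_leq; rewrite hi cjj.
    apply: eq_bigr => z /eqP cz.
    have zx : z != inr (a, j) by apply/eqP => ez; move: hi; rewrite -cz ez eqxx.
    have zy : z != inr (a, j') by apply/eqP => ez; move: hi; rewrite -cz ez cjj eqxx.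
    by rewrite !Dleaf.
  by move/inj => [] /eqP; rewrite (negbTE nj).
pose h (o : option 'I_m) := if o is Some j then c (inr (a, j)) else c (inl a).
have hinj : injective h.
  have ne j : c (inl a) != c (inr (a, j)).
    by move/forallP: prop => /(_ (inl a)) /forallP /(_ (inr (a, j))) /implyP; apply => /=.
  case=> [j|] [j'|] //= hh.
  - by rewrite (cj _ _ hh).
  - by move: (ne j); rewrite hh eqxx.
  - by move: (ne j'); rewrite hh eqxx.
have := @leq_card (option 'I_m : finType) _ h hinj.
by rewrite card_option !card_ord.
Qed.
End LB.

Section UB.
Variables (T : finType) (e : rel T) (m : nat) (k : nat) (c : {ffun T -> 'I_k}).
Hypothesis conn : forall x y : T, connect e x y.
Hypothesis hc : locating_coloring e c.
Local Notation G := (corona e (edgeless m)).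
Local Notation V := (T + T * 'I_m)%type.

Definition c' : {ffun V -> 'I_(k + m)} :=
  [ffun x => match x with inl a => lshift m (c a) | inr (_, j) => rshift k j end].

Lemma lr_ne (i : 'I_k) (j : 'I_m) : lshift m i != rshift k j.
Proof.
apply/eqP => /(congr1 val) /= h.
by have := ltn_ord i; rewrite h ltnNge leq_addr.
Qed.

Lemma dc_lt a (i : 'I_k) : dist_class e c a i < #|T|.
Proof.
case/and3P: hc => _ /forallP /(_ i) /existsP [z0 /eqP cz0] _.
apply: leq_ltn_trans (conn_dist (conn a z0)).
by apply: bigmin_leq; rewrite cz0.
Qed.

Lemma TV : #|T| <= #|{: V}|.
Proof. by rewrite card_sum leq_addr. Qed.

Lemma Lgen (x : V) (d : nat -> nat) a (i : 'I_k) :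
  (forall z, dist G x (inl z) = d (dist e a z)) ->
  {homo d : p q / p <= q} -> d (dist_class e c a i) <= #|{: V}| ->
  dist_class G c' x (lshift m i) = d (dist_class e c a i).
Proof.
move=> hd mono hv.
case/and3P: hc => _ /forallP /(_ i) /existsP [z0 /eqP cz0] _.
set v := dist_class e c a i.
have vlt : v < #|T|.
  apply: leq_ltn_trans (conn_dist (conn a z0)).
  by apply: bigmin_leq; rewrite cz0.
have [vT|[z1 [/eqP cz1 dz1]]] := bigmin_att (fun z => c z == i) (dist e a) #|T|.
  by move: vlt; rewrite /v /dist_class vT ltnn.
apply/eqP; rewrite eqn_leq; apply/andP; split.
  rewrite /dist_class.
  have h1 : c' (inl z1) == lshift m i by rewrite ffunE cz1.
  apply: leq_trans (@bigmin_leq _ (fun y => c' y == lshift m i) (dist G x) #|{: V}| (inl z1) h1) _.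
  by rewrite hd dz1.
apply: bigmin_geq => // [[z|[b j]]]; rewrite ffunE.
  move=> /eqP /(congr1 val) /= /val_inj czi.
  by rewrite hd; apply: mono; apply: bigmin_leq; rewrite czi.
by rewrite eq_sym (negbTE (lr_ne _ _)).
Qed.

Lemma L1 a (i : 'I_k) :
  dist_class G c' (inl a) (lshift m i) = dist_class e c a i.
Proof.
apply: (@Lgen (inl a) id) => //.
  by move=> z; rewrite Dtree.
exact: ltnW (leq_trans (dc_lt a i) TV).
Qed.

Lemma L2 a j (i : 'I_k) :
  dist_class G c' (inr (a, j)) (lshift m i) = (dist_class e c a i).+1.
Proof.
apply: (@Lgen (inr (a, j)) succn) => //.
  move=> z; rewrite Dleaf // Dtree //; congr _.+1; apply/minn_idPl.
  have := leq_trans (conn_dist (conn a z)) TV.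
  by case: #|{: V}|.
exact: leq_trans (dc_lt a i) TV.
Qed.

Lemma UBloc (a0 : T) : locating_coloring G c'.
Proof.
case/and3P: hc => prop surj /injectiveP inj.
apply/and3P; split.
- apply/forallP => [[a|[a j]]]; apply/forallP => [[b|[b j']]]; apply/implyP => /= eab; rewrite !ffunE.
  + apply/eqP => /(congr1 val) /= /val_inj h.
    by move/forallP: prop => /(_ a) /forallP /(_ b) /implyP /(_ eab); rewrite h eqxx.
  + exact: lr_ne.
  + by rewrite eq_sym lr_ne.
  + by move: eab; rewrite /edgeless andbF.
- apply/forallP => i; case: (splitP i) => [j ij|j ij].
    move/forallP: surj => /(_ j) /existsP [z /eqP cz].
    apply/existsP; exists (inl z); rewrite ffunE; apply/eqP/val_inj; by rewrite /= cz ij.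
  by apply/existsP; exists (inr (a0, j)); rewrite ffunE; apply/eqP/val_inj; rewrite /= ij.
- apply/injectiveP => x y hxy.
  have cxy := codes_col hxy.
  move: cxy hxy; case: x => [a|[a j]]; case: y => [b|[b j']]; rewrite !ffunE.
  + move=> /(congr1 val) /= /val_inj cab hxy; congr inl; apply: inj.
    apply/ffunP => i; rewrite !ffunE -!L1.
    by move/ffunP: hxy => /(_ (lshift m i)); rewrite !ffunE.
  + by move=> /eqP; rewrite (negbTE (lr_ne _ _)).
  + by move=> /eqP; rewrite eq_sym (negbTE (lr_ne _ _)).
  + move=> /(congr1 val) /= /addnI /val_inj jj hxy; subst j'; congr (inr (_, _)); apply: inj.
    apply/ffunP => i; rewrite !ffunE; apply: succn_inj; rewrite -(L2 a j i) -(L2 b j i).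
    by move/ffunP: hxy => /(_ (lshift m i)); rewrite !ffunE.
Qed.

End UB.

Lemma id_loc (T : finType) (e : rel T) : irreflexive e ->
  has_locating_coloring e #|T|.
Proof.
move=> irr; apply/existsP; exists [ffun x => enum_rank x].
apply/and3P; split.
- apply/forallP => x; apply/forallP => y; apply/implyP => exy; rewrite !ffunE.
  apply/eqP => /enum_rank_inj exy'; by move: exy; rewrite exy' irr.
- by apply/forallP => i; apply/existsP; exists (enum_val i); rewrite ffunE enum_valK.
- apply/injectiveP => x y /codes_col; rewrite !ffunE; exact: enum_rank_inj.
Qed.

Theorem theorem5 (m n : nat) (T : finType) (e : rel T) :
  1 <= m -> 2 <= n -> #|T| = n -> is_tree e ->
  m.+1 <= chiL (corona e (edgeless m)) <= chiL e + m.
Proof.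
move=> m1 n2 Tn [[_ irr] conn _].
have [a0 _] : exists a0 : T, true.
  by have /card_gt0P[a0 _] : 0 < #|T| by rewrite Tn (leq_trans _ n2).
set V := (T + T * 'I_m)%type.
have cardV : #|T| + m <= #|{: V}|.
  rewrite card_sum card_prod card_ord leq_add2l.
  by rewrite -{1}(mul1n m) leq_mul2r Tn (leq_trans _ n2) ?orbT.
apply/andP; split.
  rewrite leqNgt; apply/negP => lt.
  have lt2 : chiL (corona e (edgeless m)) < #|{: V}|.+1.
    by rewrite ltnS (leq_trans _ (leq_trans (leq_addl _ _) cardV)) // -ltnS.
  have := fi_P lt2; rewrite -/(chiL _) => /existsP [c hc].
  by have := LB a0 hc; rewrite leqNgt lt.
have hT : has_locating_coloring e #|T| by apply: id_loc.
have kle : chiL e <= #|T| by rewrite -ltnS; apply: fi_le hT.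
have := @fi_P (has_locating_coloring e) #|T|.+1; rewrite -/(chiL e) ltnS => /(_ kle).
move=> /existsP [c hc].
apply: (@fi_le (has_locating_coloring (corona e (edgeless m)))).
  by rewrite ltnS (leq_trans _ cardV) // leq_add2r.
by apply/existsP; exists (c' m c); apply: UBloc.
Qed.
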